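(* No judgment aggregation rule satisfies both the maximin property and the equity property.
   Context: An agenda is a finite nonempty list $\Phi=(\phi_1,\dots,\phi_m)$ of propositional formulas; a judgment is a vector $J\in\{0,1\}^m$, where $J(\phi_k)\in\{0,1\}$ is its $k$-th entry (1 = accepted, 0 = rejected). $\mathcal{J}(\Phi)\subseteq\{0,1\}^m$ is the nonempty set of admissible (logically consistent) judgments for $\Phi$; the agenda may be chosen so that $\mathcal{J}(\Phi)$ is any prescribed nonempty set of vectors. For a finite set of agents $N$ with $|N|=n\ge 2$, a profile is $\mathbf{P}=(J_1,\dots,J_n)\in\mathcal{J}(\Phi)^n$. A judgment aggregation rule $F$ maps every profile, for every finite group $N$ and every agenda $\Phi$, to a nonempty set $F(\mathbf{P})\subseteq\mathcal{J}(\Phi)$. The Hamming distance is $H(J,J')=\sum_{k=1}^m|J(\phi_k)-J'(\phi_k)|$. $F$ satisfies the maximin property if for all profiles $\mathbf{P}$ and all $J\in F(\mathbf{P})$ there do not exist $J'\in\mathcal{J}(\Phi)$ and $j\in N$ with $H(J_i,J')<H(J_j,J)$ for all $i\in N$. $F$ satisfies the equity property if for all profiles $\mathbf{P}$ and all $J\in F(\mathbf{P})$ there do not exist $J'\in\mathcal{J}(\Phi)$ and $i',j'\in N$ with $|H(J_i,J')-H(J_j,J')|<|H(J_{i'},J)-H(J_{j'},J)|$ for all $i,j\in N$. *)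

(* Defs.v *)
From mathcomp Require Import all_boot.
Set Implicit Arguments. Unset Strict Implicit. Unset Printing Implicit Defensive.

Inductive form : Type :=
  | Var of nat
  | Neg of form
  | And of form & form
  | Or of form & form.

Fixpoint eval (v : nat -> bool) (f : form) : bool :=
  match f with
  | Var x => v x
  | Neg g => ~~ eval v g
  | And g h => eval v g && eval v h
  | Or g h => eval v g || eval v h
  end.

Definition agenda (m : nat) := m.-tuple form.

(* A judgment: a 0/1 vector of length m (true = accepted). *)
Definition judgment (m : nat) := {ffun 'I_m -> bool}.

(* J is admissible (logically consistent) for Phi: the formulas accepted and
   the negations of the formulas rejected are jointly satisfiable. *)
Definition admissible (m : nat) (Phi : agenda m) (J : judgment m) : Prop :=
  exists v : nat -> bool, forall k : 'I_m, J k = eval v (tnth Phi k).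

Definition hamming (m : nat) (J J' : judgment m) : nat :=
  \sum_(k < m) (J k != J' k).

Definition natdist (a b : nat) : nat := (a - b) + (b - a).

Definition profile (n m : nat) := 'I_n -> judgment m.

Definition admissible_profile (n m : nat) (Phi : agenda m) (P : profile n m) :=
  forall i : 'I_n, admissible Phi (P i).

(* A candidate aggregation rule: F n m Phi P J means J \in F(P). *)
Definition rule_type :=
  forall (n m : nat), agenda m -> profile n m -> judgment m -> Prop.

Definition is_JA_rule (F : rule_type) : Prop :=
  forall (n m : nat) (Phi : agenda m) (P : profile n m),
    1 < n -> 0 < m -> admissible_profile Phi P ->
    (exists J, F n m Phi P J) /\ (forall J, F n m Phi P J -> admissible Phi J).

Definition maximin (F : rule_type) : Prop :=
  forall (n m : nat) (Phi : agenda m) (P : profile n m),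
    1 < n -> 0 < m -> admissible_profile Phi P ->
    forall J, F n m Phi P J ->
      ~ (exists J' : judgment m, admissible Phi J' /\
           exists j : 'I_n, forall i : 'I_n, hamming (P i) J' < hamming (P j) J).

Definition equity (F : rule_type) : Prop :=
  forall (n m : nat) (Phi : agenda m) (P : profile n m),
    1 < n -> 0 < m -> admissible_profile Phi P ->
    forall J, F n m Phi P J ->
      ~ (exists J' : judgment m, admissible Phi J' /\
           exists i' j' : 'I_n, forall i j : 'I_n,
             natdist (hamming (P i) J') (hamming (P j) J')
             < natdist (hamming (P i') J) (hamming (P j') J)).

(* Main.v *)
Require Import Defs.
From mathcomp Require Import all_boot.

Definition Phi0 : agenda 4 :=
  [tuple Or (Var 0) (Var 1); And (Var 0) (Neg (Var 1)); Var 1; Var 1].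

Definition jd (l : seq bool) : judgment 4 := [ffun k : 'I_4 => nth false l k].

Definition P0 : profile 2 4 :=
  fun i => if val i == 0 then jd [:: false; false; false; false]
           else jd [:: true; true; false; false].

Definition K0 : judgment 4 := jd [:: true; false; true; true].

Lemma ham4 (A B : judgment 4) : hamming A B =
  (A (inord 0) != B (inord 0)) + (A (inord 1) != B (inord 1)) +
  (A (inord 2) != B (inord 2)) + (A (inord 3) != B (inord 3)).
Proof.
rewrite /hamming !big_ord_recl big_ord0 addn0 !addnA.
by congr (_ + _ + _ + _); congr (A _ != B _); apply: val_inj; rewrite /= inordK.
Qed.

Lemma adm_jd l (v : nat -> bool) : l = [:: v 0 || v 1; v 0 && ~~ v 1; v 1; v 1] ->
  admissible Phi0 (jd l).
Proof.
move=> ->; exists v => k; rewrite /jd ffunE.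
by case: k => [[|[|[|[|k]]]] Hk] //=.
Qed.

Theorem proposition1 :
  ~ (exists F : rule_type, is_JA_rule F /\ maximin F /\ equity F).
Proof.
move=> [F [HF [Hm He]]].
have Hadm : admissible_profile Phi0 P0.
  move=> [[|[|i]] Hi] //; rewrite /P0 /=.
    by apply: (@adm_jd _ (fun _ => false)).
  by apply: (@adm_jd _ (fun x => x == 0)).
have [[J HJ] Hall] := HF 2 4 Phi0 P0 isT isT Hadm.
have [v Hv] := Hall J HJ.
have HK : admissible Phi0 K0 by apply: (@adm_jd _ (fun _ => true)).
have E : forall k : 'I_4, J k = nth false [:: v 0 || v 1; v 0 && ~~ v 1; v 1; v 1] k.
  by move=> [[|[|[|[|k]]]] Hk] //; rewrite Hv.
case Hv1 : (v 1).
- apply: (Hm 2 4 Phi0 P0 isT isT Hadm J HJ).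
  exists (P0 ord0); split; first exact: Hadm.
  exists ord0 => i.
  rewrite !ham4 !E Hv1 /= orbT.
  case: i => [[|[|i]] Hi] //; rewrite /P0 /jd !ffunE !inordK //= ?andbF //=.
- apply: (He 2 4 Phi0 P0 isT isT Hadm J HJ).
  exists K0; split; first exact: HK.
  exists ord0, (Ordinal (isT : 1 < 2)) => i j.
  have H3 : forall t : 'I_2, hamming (P0 t) K0 = 3.
    by move=> [[|[|x]] Hx] //; rewrite ham4 /P0 /K0 /jd !ffunE !inordK.
  rewrite !H3 /natdist !ham4 !E Hv1 /P0 /jd /= !ffunE !inordK //.
  by case: (v 0).
Qed.
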